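(* Let $A \subset \mathbb{Z}^d$ be a finite set such that $A - A$ generates $\mathbb{Z}^d$ additively and such that its convex hull $\Delta_A$ is a $d$-dimensional simplex. Denote by $v_1, \ldots, v_{d+1}$ the vertices of $\Delta_A$, and for each $i$ let \[ T_i(A) = \bigcup_{k \geq 0} k(A - v_i), \] where $A - v_i = \{a - v_i : a \in A\}$. Then for all integers $h \geq 0$ with $h \geq \mathrm{vol}(\Delta_A)\cdot (d+1)! - 2 - 2d$ we have \[ hA = \bigcap_{i=1}^{d+1} \big( h v_i + T_i(A) \big). \]
   Context: For a finite set $B \subset \mathbb{Z}^d$ and integer $k \geq 0$, $kB = \{b_1 + \cdots + b_k : b_i \in B\}$, with $0B = \{0\}$. $\mathrm{vol}(\Delta_A)$ is the $d$-dimensional Lebesgue volume of the convex hull of $A$. For a set $S$ and vector $x$, $x + S = \{x + s : s \in S\}$. *)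

(* Defs.v *)
From HB Require Import structures.
From mathcomp Require Import all_boot all_order all_algebra.
From mathcomp Require Import finmap.
Set Implicit Arguments. Unset Strict Implicit. Unset Printing Implicit Defensive.
Import Order.TTheory GRing.Theory Num.Theory.
Local Open Scope ring_scope.
Local Open Scope fset_scope.

(* Points of Z^d are row vectors 'rV[int]_d; subsets of Z^d are predicates. *)
Definition zpt (d : nat) := 'rV[int]_d.

Definition toQ (d : nat) (x : 'rV[int]_d) : 'rV[rat]_d :=
  map_mx (fun z : int => z%:~R) x.

Definition ksum (d k : nat) (B : 'rV[int]_d -> Prop) : 'rV[int]_d -> Prop :=
  fun z => exists f : 'I_k -> 'rV[int]_d,
    (forall j, B (f j)) /\ z = \sum_(j < k) f j.

Definition translate (d : nat) (x : 'rV[int]_d) (S : 'rV[int]_d -> Prop)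
  : 'rV[int]_d -> Prop := fun z => S (z - x).

Definition minus_pt (d : nat) (A : {fset 'rV[int]_d}) (v : 'rV[int]_d)
  : 'rV[int]_d -> Prop := translate (- v) (fun a => a \in A).

Definition Tcone (d : nat) (A : {fset 'rV[int]_d}) (v : 'rV[int]_d)
  : 'rV[int]_d -> Prop := fun z => exists k : nat, ksum k (minus_pt A v) z.

Definition diff_generates (d : nat) (A : {fset 'rV[int]_d}) : Prop :=
  forall z : 'rV[int]_d, exists c : 'rV[int]_d -> 'rV[int]_d -> int,
    z = \sum_(a <- A) \sum_(b <- A) c a b *: (a - b).

Definition edge_mx (d : nat) (v : 'I_d.+1 -> 'rV[int]_d) : 'M[rat]_d :=
  \matrix_(i < d, j < d) ((v (lift ord0 i) 0 j - v ord0 0 j)%:~R : rat).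

Definition aff_indep (d : nat) (v : 'I_d.+1 -> 'rV[int]_d) : Prop :=
  \det (edge_mx v) != 0.

Definition in_conv (d : nat) (v : 'I_d.+1 -> 'rV[int]_d) (x : 'rV[int]_d) : Prop :=
  exists lam : 'I_d.+1 -> rat,
    (forall i, 0 <= lam i) /\ \sum_i lam i = 1 /\
    toQ x = \sum_i lam i *: toQ (v i).

Definition conv_is_simplex (d : nat) (A : {fset 'rV[int]_d})
  (v : 'I_d.+1 -> 'rV[int]_d) : Prop :=
  aff_indep v /\ (forall i, v i \in A) /\ (forall a, a \in A -> in_conv v a).

Definition simplex_vol (d : nat) (v : 'I_d.+1 -> 'rV[int]_d) : rat :=
  `|\det (edge_mx v)| / (d`!)%:R.

(* Main.v *)
Require Import Defs.
From HB Require Import structures.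
From mathcomp Require Import all_boot all_order all_algebra.
From mathcomp Require Import finmap.
From mathcomp Require Import zify ring lra.
Set Implicit Arguments. Unset Strict Implicit. Unset Printing Implicit Defensive.
Import Order.TTheory GRing.Theory Num.Theory.
Local Open Scope ring_scope.


Section Bary.
Variable d : nat.
Variable v : 'I_d.+1 -> 'rV[int]_d.
Hypothesis hind : aff_indep v.

Definition EZ : 'M[int]_d := \matrix_(i < d, j < d) (v (lift ord0 i) 0 j - v ord0 0 j).
Definition EQ := edge_mx v.
Definition VQ j := toQ (v j).

Lemma toQD (x y : 'rV[int]_d) : toQ (x + y) = toQ x + toQ y.
Proof. by apply/matrixP => i j; rewrite !mxE intrD. Qed.
Lemma toQN (x : 'rV[int]_d) : toQ (- x) = - toQ x.
Proof. by apply/matrixP => i j; rewrite !mxE intrN. Qed.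
Lemma toQB (x y : 'rV[int]_d) : toQ (x - y) = toQ x - toQ y.
Proof. by rewrite toQD toQN. Qed.
Lemma toQ0 : toQ (0 : 'rV[int]_d) = 0.
Proof. by apply/matrixP => i j; rewrite !mxE. Qed.
Lemma toQ_sum (I : Type) (r : seq I) (P : pred I) (F : I -> 'rV[int]_d) :
  toQ (\sum_(i <- r | P i) F i) = \sum_(i <- r | P i) toQ (F i).
Proof. exact: (big_morph _ toQD toQ0). Qed.
Lemma toQMn (x : 'rV[int]_d) n : toQ (x *+ n) = n%:R *: toQ x.
Proof. by apply/matrixP => i j; rewrite !mxE mulmxnE -[x i j *+ n]mulr_natr intrM rmorph_nat mulrC. Qed.
Lemma toQ_inj : injective (@toQ d).
Proof. move=> x y /matrixP H; apply/matrixP => i j; move: (H i j); rewrite !mxE; exact: intr_inj. Qed.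
Lemma toQM (x : 'rV[int]_d) (M : 'M[int]_d) : toQ (x *m M) = toQ x *m map_mx (fun z : int => z%:~R) M.
Proof. by apply/matrixP => i j; rewrite !mxE rmorph_sum; apply: eq_bigr => k _; rewrite !mxE rmorphM. Qed.

Lemma EQE : EQ = map_mx (fun z : int => z%:~R) EZ.
Proof. by apply/matrixP => i j; rewrite !mxE. Qed.

Lemma EQ_unit : EQ \in unitmx.
Proof. by rewrite unitmxE unitfE. Qed.

Lemma rowEQ l : row l EQ = VQ (lift ord0 l) - VQ ord0.
Proof. by apply/rowP => j; rewrite !mxE intrB. Qed.

Definition w (y : 'rV[int]_d) : 'rV[rat]_d := toQ y *m invmx EQ.

Definition beta (y : 'rV[int]_d) (j : 'I_d.+1) : rat :=
  if unlift ord0 j is Some l then w y 0 l else - \sum_l w y 0 l.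

Lemma beta0 y : beta y ord0 = - \sum_l w y 0 l.
Proof. by rewrite /beta unlift_none. Qed.
Lemma betaS y l : beta y (lift ord0 l) = w y 0 l.
Proof. by rewrite /beta liftK. Qed.

Lemma sum_coef (c : 'I_d.+1 -> rat) : \sum_j c j = 0 ->
  \sum_j c j *: VQ j = (\row_l c (lift ord0 l)) *m EQ.
Proof.
move=> hc; rewrite mulmx_sum_row big_ord_recl.
have -> : c ord0 = - \sum_l c (lift ord0 l).
  by apply/eqP; rewrite -addr_eq0 -big_ord_recl hc.
rewrite scaleNr scaler_suml -sumrN -big_split /=; apply: eq_bigr => l _.
by rewrite rowEQ mxE scalerBr addrC.
Qed.

Lemma beta_sum0 y : \sum_j beta y j = 0.
Proof. by rewrite big_ord_recl beta0 (eq_bigr (fun l => w y 0 l) (fun l _ => betaS y l)) addNr. Qed.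

Lemma beta_repr y : toQ y = \sum_j beta y j *: VQ j.
Proof.
rewrite sum_coef ?beta_sum0 //.
have -> : \row_l beta y (lift ord0 l) = w y by apply/rowP => l; rewrite mxE betaS.
by rewrite /w mulmxKV // EQ_unit.
Qed.

Lemma beta_uniq y (c : 'I_d.+1 -> rat) : \sum_j c j = 0 ->
  toQ y = \sum_j c j *: VQ j -> forall j, c j = beta y j.
Proof.
move=> hc hy.
have hw : w y = \row_l c (lift ord0 l).
  by rewrite /w hy sum_coef // mulmxK // EQ_unit.
have hS l : c (lift ord0 l) = beta y (lift ord0 l) by rewrite betaS hw mxE.
move=> j; case: (unliftP ord0 j) => [l ->|->]; first exact: hS.
have h0 : c ord0 = - \sum_l c (lift ord0 l).
  by apply/eqP; rewrite -addr_eq0 -big_ord_recl hc.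
by rewrite h0 beta0; congr (- _); apply: eq_bigr => l _; rewrite hw mxE.
Qed.


Lemma sum_delta (T : finType) (l : T) (F : T -> rat) :
  \sum_j (j == l)%:R * F j = F l.
Proof.
rewrite (bigD1 l) //= eqxx mul1r big1 ?addr0 // => j /negbTE ->; by rewrite mul0r.
Qed.
Lemma sum_deltaZ (T : finType) (l : T) (F : T -> 'rV[rat]_d) :
  \sum_j (j == l)%:R *: F j = F l.
Proof.
rewrite (bigD1 l) //= eqxx scale1r big1 ?addr0 // => j /negbTE ->; by rewrite scale0r.
Qed.
Lemma sum_delta1 (T : finType) (l : T) : \sum_(j : T) ((j == l)%:R : rat) = 1.
Proof. by rewrite (bigD1 l) //= eqxx big1 ?addr0 // => j /negbTE ->. Qed.

Lemma betaD x y j : beta (x + y) j = beta x j + beta y j.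
Proof.
apply/esym/(beta_uniq (c := fun j => beta x j + beta y j)).
  by rewrite big_split /= !beta_sum0 addr0.
by rewrite toQD !beta_repr -big_split /=; apply: eq_bigr => i _; rewrite scalerDl.
Qed.
Lemma beta_zero j : beta 0 j = 0.
Proof.
apply/esym/(beta_uniq (c := fun _ => 0)); first by rewrite big1.
by rewrite toQ0 big1 // => i _; rewrite scale0r.
Qed.
Lemma betaN x j : beta (- x) j = - beta x j.
Proof. by apply/eqP; rewrite -addr_eq0 -betaD addNr beta_zero. Qed.
Lemma betaB x y j : beta (x - y) j = beta x j - beta y j.
Proof. by rewrite betaD betaN. Qed.
Lemma betaMn x n j : beta (x *+ n) j = n%:R * beta x j.
Proof. elim: n => [|n IH]; first by rewrite mulr0n beta_zero mul0r. by rewrite mulrS betaD IH mulrS mulrDl mul1r. Qed.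
Lemma beta_sum (I : Type) (r : seq I) (P : pred I) (F : I -> 'rV[int]_d) j :
  beta (\sum_(i <- r | P i) F i) j = \sum_(i <- r | P i) beta (F i) j.
Proof. exact: (big_morph (beta^~ j) (fun x y => betaD x y j) (beta_zero j)). Qed.

Lemma beta_vert l i j : beta (v l - v i) j = (j == l)%:R - (j == i)%:R.
Proof.
apply/esym/(beta_uniq (c := fun j => (j == l)%:R - (j == i)%:R)).
  by rewrite sumrB !sum_delta1 subrr.
rewrite toQB; under eq_bigr do rewrite scalerBl.
by rewrite sumrB !sum_deltaZ.
Qed.

Lemma betaV (y : 'rV[int]_d) i : toQ y = \sum_j beta y j *: (VQ j - VQ i).
Proof.
under eq_bigr do rewrite scalerBr.
by rewrite sumrB -scaler_suml beta_sum0 scale0r subr0 beta_repr.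
Qed.

Lemma detEQ : \det EQ = (\det EZ)%:~R.
Proof. by rewrite EQE det_map_mx. Qed.

Lemma detEQ_w_int y l : \det EQ * w y 0 l \is a Num.int.
Proof.
have -> : \det EQ * w y 0 l = ((y *m \adj EZ) 0 l)%:~R.
  rewrite /w /invmx EQ_unit -scalemxAr mxE mulrA divff ?mul1r -?unitfE ?EQ_unit //.
  by rewrite EQE -map_mx_adj -toQM mxE.
exact: intr_int.
Qed.

Definition Nq : rat := `|\det EQ|.

Lemma Nq_w_int y l : Nq * w y 0 l \is a Num.int.
Proof.
rewrite /Nq normrEsign -mulrA rpredM ?detEQ_w_int //.
by rewrite rpredX // rpredN rpred1.
Qed.

Lemma Nq_beta_int y j : Nq * beta y j \is a Num.int.
Proof.
case: (unliftP ord0 j) => [l ->|->]; first by rewrite betaS Nq_w_int.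
rewrite beta0 mulrN rpredN mulr_sumr rpred_sum // => l _; exact: Nq_w_int.
Qed.

Lemma Nq_gt0 : 0 < Nq.
Proof. by rewrite /Nq normr_gt0. Qed.

Definition inL (y : 'rV[int]_d) := exists u : 'rV[int]_d, y = u *m EZ.

Lemma inL_beta_int y j : inL y -> beta y j \is a Num.int.
Proof.
case=> u ->.
have hw : w (u *m EZ) = toQ u by rewrite /w toQM -EQE mulmxK // EQ_unit.
case: (unliftP ord0 j) => [l ->|->]; first by rewrite betaS hw mxE intr_int.
rewrite beta0 rpredN rpred_sum // => l _; by rewrite hw mxE intr_int.
Qed.

End Bary.

Section APts.
Variable d : nat.
Variable v : 'I_d.+1 -> 'rV[int]_d.
Hypothesis hind : aff_indep v.
Variable A : {fset 'rV[int]_d}.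
Hypothesis hA : forall a, a \in A -> in_conv v a.

Lemma betaA a i : a \in A -> exists lam : 'I_d.+1 -> rat,
  (forall j, 0 <= lam j) /\ \sum_j lam j = 1 /\
  toQ a = \sum_j lam j *: VQ v j /\
  forall j, beta v (a - v i) j = lam j - (j == i)%:R.
Proof.
move=> /hA [lam [h0 [h1 h2]]]; exists lam; split => //; split => //; split => //.
move=> j; apply/esym/(beta_uniq hind (c := fun j => lam j - (j == i)%:R)).
  by rewrite sumrB h1 sum_delta1 subrr.
rewrite toQB h2.
have -> : toQ (v i) = \sum_j (j == i)%:R *: VQ v j by rewrite sum_deltaZ.
by rewrite -sumrB; apply: eq_bigr => k _; rewrite scalerBl.
Qed.

Lemma betaA_ge0 a i j : a \in A -> j != i -> 0 <= beta v (a - v i) j.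
Proof. move=> /(betaA i) [lam [h0 [_ [_ ->]]]] /negbTE ->; by rewrite subr0. Qed.

Lemma betaA_ge a i : a \in A -> -1 <= beta v (a - v i) i.
Proof. move=> /(betaA i) [lam [h0 [_ [_ ->]]]]; rewrite eqxx lerBrDr addrC subrr; exact: h0. Qed.

Lemma betaA_lt0 a i : a \in A -> a != v i -> beta v (a - v i) i < 0.
Proof.
move=> /(betaA i) [lam [h0 [h1 [h2 ->]]]] hne; rewrite eqxx subr_lt0.
have hle : lam i <= 1.
  by rewrite -h1 (bigD1 i) //= lerDl sumr_ge0.
rewrite lt_neqAle hle andbT; apply: contra hne => /eqP hi.
have hz : forall j, j != i -> lam j = 0.
  move=> j hj; move: h1; rewrite (bigD1 i) //= hi => h1'.
  have hs : \sum_(k | k != i) lam k = 0 by move/eqP: h1'; rewrite addrC -subr_eq0 addrK => /eqP.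
  by move/psumr_eq0P: hs => H; apply: H.
apply/eqP/toQ_inj; rewrite h2 (bigD1 i) //= hi scale1r big1 ?addr0 // => j hj.
by rewrite hz // scale0r.
Qed.

Lemma int_neg_le (x : rat) : x \is a Num.int -> x < 0 -> x <= -1.
Proof.
move=> /intrP [m ->]; rewrite ltrz0 => hm.
have : (m <= -1)%R by lia.
by rewrite -(ler_int rat) => h; apply: le_trans (h) _; rewrite rmorphN rmorph1.
Qed.

Lemma betaA_le a i : a \in A -> a != v i -> Nq v * beta v (a - v i) i <= -1.
Proof.
move=> ha hne; apply: int_neg_le; first exact: Nq_beta_int.
by rewrite pmulr_rlt0 ?Nq_gt0 // betaA_lt0.
Qed.

End APts.

Lemma sum_nseq (d : nat) (T : Type) n (x : T) (F : T -> 'rV[int]_d) :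
  \sum_(a <- nseq n x) F a = F x *+ n.
Proof. elim: n => [|n IH]; first by rewrite big_nil mulr0n. by rewrite /= big_cons IH mulrS. Qed.

Lemma sum_gt (T : eqType) (f : T -> rat) (J : seq T) : J != [::] ->
  all (fun a => -1 < f a) J -> - (size J)%:R < \sum_(a <- J) f a.
Proof.
elim: J => // a J IH _ /= /andP [ha hJ]; rewrite big_cons -add1n natrD.
case: J IH hJ => [|b J] IH hJ; first by rewrite big_nil addr0 /=; lra.
have := IH isT hJ; set s := \sum_(_ <- _) _; set m := (size _)%:R; lra.
Qed.

Lemma sum_seq_ge0 (T : eqType) (J : seq T) (f : T -> rat) :
  (forall a, a \in J -> 0 <= f a) -> 0 <= \sum_(a <- J) f a.
Proof. by move=> h; rewrite big_seq sumr_ge0. Qed.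

Section Repl.
Variable d : nat.
Variable v : 'I_d.+1 -> 'rV[int]_d.
Hypothesis hind : aff_indep v.
Variable A : {fset 'rV[int]_d}.
Hypothesis hA : forall a, a \in A -> in_conv v a.
Hypothesis hvA : forall j, v j \in A.

Lemma replace_step i (J : seq 'rV[int]_d) : all (mem A) J -> J != [::] ->
  all (fun a => -1 < beta v (a - v i) i) J ->
  inL v (\sum_(a <- J) (a - v i)) ->
  exists R, all (mem A) R /\ \sum_(a <- R) (a - v i) = \sum_(a <- J) (a - v i)
     /\ (size R < size J)%N.
Proof.
move=> /allP hJA hJ0 hnear hL; set y := \sum_(a <- J) (a - v i) in hL *.
have hint j : beta v y j \is a Num.int by exact: inL_beta_int.
have hnn j : j != i -> 0 <= beta v y j.
  move=> hj; rewrite /y beta_sum //; apply: (@sum_seq_ge0 'rV[int]_d) => a ha.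
  by apply: (betaA_ge0 hind hA) => //; apply: hJA.
have hnat j : j != i -> beta v y j \is a Num.nat by move=> hj; rewrite natrEint hint hnn.
pose n j : nat := if j == i then 0%N else Num.truncn (beta v y j).
have hn j : (n j)%:R = if j == i then 0 else beta v y j.
  by rewrite /n; case: eqP => [//|/eqP hj]; rewrite truncnK ?hnat.
exists (flatten [seq nseq (n j) (v j) | j <- enum 'I_d.+1]); split; [|split].
- apply/allP => x /flatten_mapP [j _]; rewrite mem_nseq => /andP [_ /eqP ->]; exact: hvA.
- rewrite big_flatten /= big_map big_enum /=.
  under eq_bigr do rewrite sum_nseq.
  apply: toQ_inj; rewrite toQ_sum (betaV hind y i); apply: eq_bigr => j _.
  rewrite toQMn toQB hn; case: eqP => [->|//]; by rewrite !subrr !scaler0.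
- have hsz : (size (flatten [seq nseq (n j) (v j) | j <- enum 'I_d.+1]))%:R
             = - beta v y i :> rat.
    rewrite size_flatten sumnE /shape -map_comp big_map big_enum /= natr_sum.
    under eq_bigr do rewrite size_nseq hn.
    have := beta_sum0 v y; rewrite (bigD1 i) //= => hs.
    rewrite (bigD1 i) //= eqxx add0r.
    rewrite (eq_bigr (fun j => beta v y j)); last by move=> j /negbTE ->.
    lra.
  have hlt : - (size J)%:R < beta v y i.
    by rewrite /y beta_sum //; apply: sum_gt.
  rewrite -(ltr_nat rat) hsz; lra.
Qed.

End Repl.

Lemma card_ltpred n m : (m <= n)%N -> #|[pred r : 'I_n | (r < m)%N]| = m.
Proof.
move=> hmn; rewrite -sum1_card.
have := @big_ord_widen_cond _ 0%N addn m n (fun _ => true) (fun _ => 1%N) hmn.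
rewrite /= => <-; by rewrite sum1_card card_ord.
Qed.

Section Pig.
Variable d : nat.
Variable v : 'I_d.+1 -> 'rV[int]_d.
Hypothesis hind : aff_indep v.

Definition Nn : nat := `|\det (EZ v)|%N.

Lemma Nq_Nn : Nq v = (Nn%:R : rat).
Proof. by rewrite /Nq detEQ natr_absz intr_norm. Qed.

Lemma detEZ_neq0 : \det (EZ v) != 0.
Proof. by move: hind; rewrite /aff_indep -/(EQ v) detEQ intr_eq0. Qed.

Lemma inLN y : inL v y -> inL v (- y).
Proof. by case=> u ->; exists (- u); rewrite mulNmx. Qed.

Lemma pigeon (p : nat -> 'rV[int]_d) :
  exists m1 m2, (m1 < m2 <= Nn)%N /\ inL v (p m2 - p m1).
Proof.
case: (int_Smith_normal_form (EZ v)) => L uL [R uR [ds _ hE]].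
set D := \matrix_(i < d, j < d) (ds`_i *+ (i == j :> nat)) in hE.
have hD : D = diag_mx (\row_k ds`_k) by apply/matrixP => i j; rewrite !mxE.
pose dd (k : 'I_d) : int := ds`_k.
have hunit (M : 'M[int]_d) : M \in unitmx -> `|\det M|%N = 1%N.
  by rewrite unitmxE => /orP [] /eqP ->.
have hNn : Nn = (\prod_k `|dd k|)%N.
  rewrite /Nn hE !det_mulmx !abszM (hunit L uL) (hunit R uR) mul1n muln1.
  by rewrite hD det_diag (big_morph _ abszM (erefl _)); apply: eq_bigr => k _; rewrite mxE.
have hds0 (k : 'I_d) : dd k != 0.
  apply/eqP => h0; move: detEZ_neq0; rewrite hE !det_mulmx hD det_diag (bigD1 k) //= mxE -/(dd k) h0.
  by rewrite mul0r mulr0 mul0r eqxx.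
have hdsle k : (`|dd k| <= Nn)%N.
  rewrite hNn (bigD1 k) //= leq_pmulr // prodn_gt0 // => j; by rewrite absz_gt0.
pose cls (x : 'rV[int]_d) : {ffun 'I_d -> 'I_Nn.+1} :=
  [ffun k => inord `|modz ((x *m invmx R) ord0 k) (dd k)|%N].
pose F (k : 'I_d) := [pred r : 'I_Nn.+1 | (r < `|dd k|)%N].
have hlt x k : (`|modz ((x *m invmx R) ord0 k) (dd k)| < `|dd k|)%N.
  by rewrite -ltz_nat gez0_abs ?modz_ge0 // ltz_mod.
have hle x k : (`|modz ((x *m invmx R) ord0 k) (dd k)| < Nn.+1)%N.
  by rewrite ltnS; apply: leq_trans (hdsle k); apply: ltnW.
have hF x : cls x \in family F.
  by apply/familyP => k; rewrite /F /cls inE ffunE inordK.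
have hcard : #|family F| = Nn.
  rewrite card_family foldrE big_map big_enum /= hNn; apply: eq_bigr => k _.
  by rewrite card_ltpred // -hNn; apply: leqW (hdsle k).
have hcls x x' : cls x = cls x' -> inL v (x - x').
  move=> /ffunP hxx.
  set y := x *m invmx R; set y' := x' *m invmx R.
  have hk k : (dd k %| y ord0 k - y' ord0 k)%Z.
    rewrite -eqz_mod_dvd; move: (hxx k); rewrite !ffunE => /(congr1 (@nat_of_ord _)).
    rewrite !inordK // => /(congr1 Posz); rewrite !gez0_abs ?modz_ge0 // => ->.
    by rewrite /y /y'.
  pose q := \row_k divz (y ord0 k - y' ord0 k) (dd k).
  have hY : (x - x') *m invmx R = q *m D.
    apply/rowP => k; rewrite mulmxBl [in LHS]mxE [X in _ + X]mxE.
    rewrite [RHS]mxE (bigD1 k) //= big1 ?addr0.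
      by rewrite [q 0 k]mxE [D k k]mxE eqxx mulr1n divzK.
    move=> j hj; rewrite [D j k]mxE.
    by rewrite (_ : (j == k :> nat) = false) ?mulr0n ?mulr0 //; exact: negbTE hj.
  exists (q *m invmx L).
  rewrite hE -[x - x'](mulmxKV uR) hY !mulmxA mulmxKV //.
have [inj|/injectivePn [m1 [m2 hne heq]]] := boolP (injectiveb (fun m : 'I_Nn.+1 => cls (p m))).
  have := subset_leq_card (_ : codom (fun m : 'I_Nn.+1 => cls (p m)) \subset family F).
  rewrite card_codom ?card_ord ?hcard ?ltnn; last by apply/injectiveP.
  move=> H; suff: false by [].
  apply: H; apply/subsetP => f /codomP [m ->]; exact: hF.
have hm1 := ltn_ord m1; have hm2 := ltn_ord m2.
case: (ltngtP m1 m2) => [h12|h21|/val_inj h]; last by rewrite h eqxx in hne.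
- by exists m1, m2; split; [apply/andP; split; lia | apply: hcls; rewrite heq].
- by exists m2, m1; split; [apply/andP; split; lia | apply: hcls; exact: heq].
Qed.

End Pig.

Section Red.
Variable d : nat.
Variable v : 'I_d.+1 -> 'rV[int]_d.
Hypothesis hind : aff_indep v.
Variable A : {fset 'rV[int]_d}.
Hypothesis hA : forall a, a \in A -> in_conv v a.
Hypothesis hvA : forall j, v j \in A.
Variable i : 'I_d.+1.

Definition Ssum (s : seq 'rV[int]_d) := \sum_(a <- s) (a - v i).
Definition near (a : 'rV[int]_d) := -1 < beta v (a - v i) i.

Lemma Ssum_cat s1 s2 : Ssum (s1 ++ s2) = Ssum s1 + Ssum s2.
Proof. by rewrite /Ssum big_cat. Qed.

Lemma reduce s : all (mem A) s -> exists s', all (mem A) s' /\ Ssum s' = Ssum s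
  /\ (count near s' < Nn v)%N.
Proof.
have [n] := ubnP (size s); elim: n s => // n IH s hs hsA.
case: (ltnP (count near s) (Nn v)) => hc; first by exists s.
set t := filter near s; set u := filter (predC near) s.
have hst : size t = count near s by rewrite size_filter.
have [m1 [m2 [/andP [h12 h2N] hL]]] :=
  pigeon hind (fun m => Ssum (take m t)).
set J := drop m1 (take m2 t).
have htake : take m2 t = take m1 t ++ J.
  by rewrite -{1}(cat_take_drop m1 (take m2 t)) take_takel // ltnW.
have hSJ : Ssum (take m2 t) - Ssum (take m1 t) = Ssum J.
  by rewrite htake Ssum_cat addrAC subrr add0r.
have hszJ : size J = (m2 - m1)%N.
  by rewrite size_drop size_takel //; apply: leq_trans h2N _; by rewrite hst.
have hJ0 : J != [::].
  by apply/eqP => hJ; move: hszJ; rewrite hJ /=; lia.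
have hJs x : x \in J -> x \in s /\ near x.
  by move=> /mem_drop /mem_take; rewrite mem_filter => /andP [].
have hJA : all (mem A) J.
  by apply/allP => x /hJs [hx _]; exact: (allP hsA).
have hJn : all near J by apply/allP => x /hJs [].
rewrite hSJ in hL.
have [R [hRA [hRS hRsz]]] := replace_step hind hA hvA hJA hJ0 hJn hL.
set s1 := take m1 t ++ drop m2 t ++ R ++ u.
have hperm : Ssum s = Ssum t + Ssum u.
  have hp : perm_eq (t ++ u) s by rewrite (perm_filterC near s).
  by rewrite -Ssum_cat /Ssum (perm_big _ hp).
have ht : t = take m1 t ++ J ++ drop m2 t.
  by rewrite catA -htake cat_take_drop.
have hS1 : Ssum s1 = Ssum s.
  have hRS' : Ssum R = Ssum J := hRS.
  by rewrite hperm {1}ht /s1 !Ssum_cat hRS' !addrA (addrAC (Ssum (take m1 t))).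
have hszt : size t = (size (take m1 t) + size J + size (drop m2 t))%N.
  by rewrite {1}ht !size_cat addnA.
have hsize : (size s1 < size s)%N.
  rewrite -(count_predC near s) -size_filter -/t -size_filter -/u /s1 !size_cat.
  rewrite hszt; move: hRsz; set a := size (take m1 t); set b := size (drop m2 t); set c := size R; set e := size J; set f := size u; lia.
have hs1A : all (mem A) s1.
  rewrite /s1 !all_cat hRA /=; apply/and3P; split.
  - by apply/allP => x /mem_take; rewrite mem_filter => /andP [_ /(allP hsA)].
  - by apply/allP => x /mem_drop; rewrite mem_filter => /andP [_ /(allP hsA)].
  - by apply/allP => x; rewrite mem_filter => /andP [_ /(allP hsA)].
have hs1n : (size s1 < n)%N by move: hsize hs; set a := size s1; set b := size s; lia.
have [s' [h1 [h2 h3]]] := IH s1 hs1n hs1A.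
by exists s'; split => //; split => //; rewrite h2 hS1.
Qed.

End Red.

Lemma sum_subc (d : nat) (s : seq 'rV[int]_d) x :
  \sum_(a <- s) (a - x) = \sum_(a <- s) a - x *+ size s.
Proof.
elim: s => [|a s IH]; first by rewrite !big_nil mulr0n subr0.
by rewrite !big_cons IH /= mulrS opprD !addrA (addrAC a (- x)).
Qed.

Lemma arith_fin (N c m h k r : rat) : 1 <= N -> 0 <= c -> c + 1 <= N -> N - 2 <= m ->
  0 <= m -> N * r = 1 -> k <= -(m - h) + c * (1 - r) -> k < h + 1.
Proof.
move=> hN1 hc0 hc hm1 hm0 hr hk.
have hr0 : 0 < r by nra.
have hr1 : r <= 1 by nra.
have hcr : c * (1 - r) <= (N - 1) * (1 - r) by apply: ler_wpM2r; lra.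
have e2 : (N - 1) * (1 - r) = N - 2 + r by rewrite mulrBl mul1r mulrBr mulr1 hr; ring.
case: (ltrP 1 N) => hN.
  have hr2 : r < 1 by nra.
  lra.
have hNe : N = 1 by apply/le_anti; rewrite hN hN1.
rewrite hNe mul1r in hr; rewrite hr subrr mulr0 in hk; lra.
Qed.
Lemma arith_mu (N m h dd : rat) : 0 <= dd -> 0 <= h -> h <= (dd + 1) * m ->
  N * (dd + 1) - 2 - 2 * dd <= h -> N - 2 <= m /\ 0 <= m.
Proof. move=> hd hh hm hN; split; nra. Qed.

Section Fin.
Variable d : nat.
Variable v : 'I_d.+1 -> 'rV[int]_d.
Hypothesis hind : aff_indep v.
Variable A : {fset 'rV[int]_d}.
Hypothesis hA : forall a, a \in A -> in_conv v a.
Hypothesis hvA : forall j, v j \in A.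
Variable i : 'I_d.+1.

Lemma size_bound (s : seq 'rV[int]_d) : all (mem A) s -> all (predC1 (v i)) s ->
  (size s)%:R <= - beta v (Ssum v i s) i + (count (near v i) s)%:R * (1 - (Nq v)^-1).
Proof.
rewrite /Ssum beta_sum //.
elim: s => [|a s IH] /=; first by rewrite big_nil oppr0 mul0r addr0.
move=> /andP [haA hsA] /andP [hav hsv].
have := IH hsA hsv; rewrite big_cons.
set S := \sum_(_ <- _) _; set c := (count _ _)%:R => hIH.
have hb1 := betaA_ge hind hA i haA.
have hb2 := betaA_le hind hA haA hav.
have hN := Nq_gt0 hind.
set b := beta v (a - v i) i in hb1 hb2 *.
have hbr : b <= - (Nq v)^-1.
  have -> : b = (Nq v)^-1 * (Nq v * b) by rewrite mulKf // gt_eqF.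
  rewrite -mulrN1; apply: ler_wpM2l => //; by rewrite invr_ge0 ltW.
rewrite -add1n natrD /near -/b.
have -> : count (fun a0 : 'rV_d => -1 < beta v (a0 - v i) i) s = count (near v i) s by [].
rewrite -/c; case: (boolP (-1 < b)) => hn /=; rewrite natrD; nra.
Qed.

End Fin.

Theorem main_aux (d : nat) (A : {fset 'rV[int]_d})
  (v : 'I_d.+1 -> 'rV[int]_d)
  (hgen : diff_generates A) (hsimp : conv_is_simplex A v)
  (h : nat)
  (hh : simplex_vol v * ((d.+1)`!)%:R - 2 - 2 * d%:R <= (h%:R : rat)) :
  forall z : 'rV[int]_d,
    ksum h (fun a => a \in A) z <->
    (forall i : 'I_d.+1, translate (v i *+ h) (Tcone A (v i)) z).
Proof.
case: hsimp => hind [hvA hA] z; split.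
  case=> f [hf ->] i; exists h, (fun j => f j - v i); split.
    by move=> j; rewrite /minus_pt /translate opprK subrK; exact: hf.
  by rewrite sumrB sumr_const card_ord.
move=> H.
pose mu j := beta v (z - v ord0 *+ h) j + (j == ord0)%:R * h%:R.
have hmusum : \sum_j mu j = h%:R.
  by rewrite /mu big_split /= beta_sum0 add0r sum_delta.
have [i hi] : exists i, h%:R <= (d.+1)%:R * mu i.
  case: (boolP [exists i, h%:R <= (d.+1)%:R * mu i]) => [/existsP //|/existsPn hall].
  have : \sum_(j < d.+1) (d.+1)%:R * mu j < \sum_(j < d.+1) (h%:R : rat).
    apply: ltr_sum; first by apply/hasP; exists ord0; rewrite ?mem_index_enum.
    by move=> j _; move: (hall j); rewrite -ltNge.
  by rewrite -mulr_sumr hmusum sumr_const card_ord mulr_natl ltxx.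
case: (H i) => k [f [hf hz]].
pose s := [seq f j + v i | j <- enum 'I_k].
have hsA : all (mem A) s.
  apply/allP => x /mapP [j _ ->]; move: (hf j); by rewrite /minus_pt /translate opprK.
have hsS : Ssum v i s = z - v i *+ h.
  rewrite /Ssum big_map big_enum /= hz; apply: eq_bigr => j _; by rewrite addrK.
have [s' [hs'A [hs'S hs'c]]] := reduce hind hA hvA i hsA.
pose s2 := filter (predC1 (v i)) s'.
have hs2A : all (mem A) s2.
  by apply/allP => x; rewrite mem_filter => /andP [_ /(allP hs'A)].
have hs2v : all (predC1 (v i)) s2 by exact: filter_all.
have hs2S : Ssum v i s2 = Ssum v i s'.
  rewrite /Ssum big_filter [RHS](bigID (predC1 (v i))) /= [X in _ = _ + X]big1 ?addr0 //.
  by move=> a /negPn /eqP ->; rewrite subrr.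
have hs2c : (count (near v i) s2 < Nn v)%N.
  apply: leq_ltn_trans hs'c; rewrite count_filter; by apply: sub_count => a /andP [].
have hb := size_bound hind hA hs2A hs2v.
rewrite hs2S hs'S hsS in hb.
have hbeta : beta v (z - v i *+ h) i = mu i - h%:R.
  have e : z - v i *+ h = (z - v ord0 *+ h) + (v ord0 - v i) *+ h.
    by rewrite mulrnBl addrA subrK.
  rewrite e betaD // betaMn // beta_vert // eqxx /mu /=. by rewrite mulrBr mulr1 addrA (mulrC h%:R).
rewrite hbeta Nq_Nn // in hb.
set k2 := size s2 in hb.
have hk2 : (k2 <= h)%N.
  have hN1 : (1 <= Nn v)%N by move: hs2c; lia.
  have hc : (count (near v i) s2)%:R + 1 <= (Nn v)%:R :> rat.
    by rewrite natr1 ler_nat.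
  have e : simplex_vol v * ((d.+1)`!)%:R = Nq v * (d.+1)%:R.
    rewrite /simplex_vol /Nq /EQ factS natrM; field.
    by rewrite pnatr_eq0 -lt0n fact_gt0.
  rewrite e Nq_Nn // in hh.
  have hD : (d.+1)%:R = d%:R + 1 :> rat by rewrite -addn1 natrD.
  rewrite hD in hh hi.
  have [hm1 hm0] := arith_mu (ler0n _ d) (ler0n _ h) hi hh.
  rewrite -ltnS -(ltr_nat rat) -natr1.
  apply: (arith_fin _ _ hc hm1 hm0 _ hb).
  - by rewrite ler1n.
  - by [].
  - by rewrite mulfV // pnatr_eq0 -lt0n.
pose s3 := s2 ++ nseq (h - k2) (v i).
have hsz3 : size s3 = h by rewrite size_cat size_nseq /k2; lia.
exists (fun j : 'I_h => nth 0 s3 j); split.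
  move=> j; have : nth 0 s3 j \in s3 by apply: mem_nth; rewrite hsz3.
  rewrite mem_cat => /orP [/(allP hs2A) //|]; rewrite mem_nseq => /andP [_ /eqP ->].
  exact: hvA.
rewrite [RHS](_ : _ = \sum_(a <- s3) a); last first.
  by rewrite (big_nth 0) hsz3 big_mkord.
rewrite big_cat /= (sum_nseq _ _ (fun a => a)).
have e4 : \sum_(a <- s2) a = Ssum v i s2 + v i *+ k2 by rewrite /Ssum sum_subc subrK.
by rewrite e4 hs2S hs'S hsS -addrA -mulrnDr subnKC // subrK.
Qed.

Local Open Scope fset_scope.

Theorem theorem1p3 (d : nat) (A : {fset 'rV[int]_d})
  (v : 'I_d.+1 -> 'rV[int]_d)
  (hgen : diff_generates A) (hsimp : conv_is_simplex A v)
  (h : nat)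
  (hh : simplex_vol v * ((d.+1)`!)%:R - 2 - 2 * d%:R <= (h%:R : rat)) :
  forall z : 'rV[int]_d,
    ksum h (fun a => a \in A) z <->
    (forall i : 'I_d.+1, translate (v i *+ h) (Tcone A (v i)) z).
Proof. exact: main_aux. Qed.
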